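(* Let $r\ge1$, $\mathbf{m}\in\mathbb{N}^r$, $m=m_1+\cdots+m_r$, $\mathbf{f}\in\mathbb{C}^r$, $b,c\in\mathbb{C}$ with $(c-b-m)_m\ne0$. Define $$ P_m(x)=\frac{1}{(c-b-m)_m}\sum_{k=0}^m(b)_{k}(1-c+b)_{k}D_{k}(c-b-m-x)_{m-k},\qquad D_k=\frac{(-1)^k(\mathbf{f}-b)_{\mathbf{m}}}{k!}{}_{r+1}F_{r}\!\left(\begin{matrix}-k,1-\mathbf{f}+b\\1-\mathbf{f}+b-\mathbf{m}\end{matrix}\right), $$ and $$ Q(b,c,\mathbf{f},\mathbf{m};t)=\frac{1}{(c-b-m)_{m}}\sum_{k=0}^{m}(b)_k\,C_{k,r}\,(t)_{k}\,(c-b-m-t)_{m-k},\qquad C_{k,r}=\frac{(-1)^k}{k!}{}_{r+1}F_{r}\!\left(\begin{matrix}-k,\mathbf{f}+\mathbf{m}\\\mathbf{f}\end{matrix}\right). $$ Then $P_m(x)=(\mathbf{f})_{\mathbf{m}}\,Q(b,c,\mathbf{f},\mathbf{m};x)$ identically in $x$.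
   Context: $(a)_k=\Gamma(a+k)/\Gamma(a)$. For vectors: $(\mathbf{f})_{\mathbf{m}}=\prod_i(f_i)_{m_i}$, $\mathbf{f}+\alpha$, $\mathbf{f}+\mathbf{m}$ componentwise; a vector among hypergeometric parameters means its components are listed. ${}_pF_q(\mathbf{a};\mathbf{b})$ denotes the (terminating) generalized hypergeometric series evaluated at $1$. Parameters are assumed such that all expressions are defined. *)

(* Defs.v *)
From HB Require Import structures.
From mathcomp Require Import all_boot all_order all_algebra.
From mathcomp Require Import reals.
From mathcomp Require Export complex.
Set Implicit Arguments. Unset Strict Implicit. Unset Printing Implicit Defensive.
Import Order.TTheory GRing.Theory Num.Theory.
Local Open Scope ring_scope.

Definition poch {C : ringType} (a : C) (k : nat) : C :=
  \prod_(i < k) (a + i%:R).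

Definition pochv {C : ringType} {r : nat} (f : 'I_r -> C) (m : 'I_r -> nat) : C :=
  \prod_(i < r) poch (f i) (m i).

Definition hypF {C : fieldType} {r : nat} (k : nat) (a b : 'I_r -> C) : C :=
  \sum_(j < k.+1)
     poch (- (k%:R)) j * (\prod_(i < r) poch (a i) j)
       / ((\prod_(i < r) poch (b i) j) * (j`!)%:R).

Section Defs.
Variables (R : realType) (r : nat).
Local Notation C := (R[i]).
Variables (b c : C) (f : 'I_r -> C) (m : 'I_r -> nat).

Definition msum : nat := (\sum_(i < r) m i)%N.

Definition Dk (k : nat) : C :=
  (-1) ^+ k * pochv (fun i => f i - b) m / (k`!)%:R *
  hypF k (fun i => 1 - f i + b) (fun i => 1 - f i + b - (m i)%:R).

Definition Pm (x : C) : C :=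
  (poch (c - b - msum%:R) msum)^-1 *
  \sum_(k < msum.+1) poch b k * poch (1 - c + b) k * Dk k *
                      poch (c - b - msum%:R - x) (msum - k).

Definition Ck (k : nat) : C :=
  (-1) ^+ k / (k`!)%:R * hypF k (fun i => f i + (m i)%:R) f.

Definition Qfun (t : C) : C :=
  (poch (c - b - msum%:R) msum)^-1 *
  \sum_(k < msum.+1) poch b k * Ck k * poch t k *
                      poch (c - b - msum%:R - t) (msum - k).
End Defs.

(* Main.v *)
Require Import Defs.
From HB Require Import structures.
From mathcomp Require Import all_boot all_order all_algebra.
From mathcomp Require Import reals complex.
From mathcomp Require Import ring.
Import Order.TTheory GRing.Theory Num.Theory.
Local Open Scope ring_scope.

Lemma poch0 (C : comNzRingType) (a : C) : poch a 0 = 1.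
Proof. by rewrite /poch big_ord0. Qed.

Lemma pochSr (C : comNzRingType) (a : C) n : poch a n.+1 = poch a n * (a + n%:R).
Proof. by rewrite /poch big_ord_recr. Qed.

Lemma pochSl (C : comNzRingType) (a : C) n : poch a n.+1 = a * poch (a + 1) n.
Proof.
rewrite /poch big_ord_recl /= addr0; congr (_ * _).
by apply: eq_bigr => i _; rewrite /bump /= -natr1; ring.
Qed.

Lemma pochD (C : comNzRingType) (a : C) p q : poch a (p + q) = poch a p * poch (a + p%:R) q.
Proof.
elim: q => [|q IH]; first by rewrite addn0 poch0 mulr1.
by rewrite addnS !pochSr IH natrD; ring.
Qed.

Lemma pochN (C : comNzRingType) (a : C) n : poch a n = (-1) ^+ n * poch (- a - n%:R + 1) n.
Proof.
elim: n a => [|n IH] a; first by rewrite !poch0 expr0 mulr1.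
rewrite pochSr pochSl IH exprS -natr1.
have -> : (- a - (n%:R + 1) + 1 + 1) = - a - n%:R + 1 by ring.
ring.
Qed.

Lemma sum_pascal (C : comNzRingType) n (F : nat -> C) :
  \sum_(k < n.+2) 'C(n.+1, k)%:R * F k =
  \sum_(k < n.+1) 'C(n, k)%:R * F k + \sum_(k < n.+1) 'C(n, k)%:R * F k.+1.
Proof.
have E1 : \sum_(k < n.+1) 'C(n, k)%:R * F k =
   F 0%N + \sum_(k < n.+1) 'C(n, k.+1)%:R * F k.+1.
  rewrite big_ord_recl /= bin0 mul1r [in RHS]big_ord_recr /= bin_small //.
  by rewrite mul0r addr0.
rewrite E1 big_ord_recl /= bin0 mul1r.
under eq_bigr => i _ do rewrite /bump /= binS natrD mulrDl.
by rewrite big_split /= addrA.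
Qed.

Lemma vandermonde (C : comNzRingType) (a b : C) n :
  poch (a + b) n = \sum_(k < n.+1) 'C(n, k)%:R * (poch a k * poch b (n - k)).
Proof.
elim: n => [|n IH]; first by rewrite big_ord1 bin0 subnn !poch0 !mul1r.
rewrite (@sum_pascal _ n (fun k => poch a k * poch b (n.+1 - k))) pochSr IH big_distrl -big_split /=.
apply: eq_bigr => -[k Hk] _ /=.
rewrite subSS subSn //.
rewrite !pochSr natrB //; ring.
Qed.

Definition Tn {C : comNzRingType} (F : nat -> C) (k : nat) : C :=
  \sum_(j < k.+1) (-1) ^+ (k + j) * 'C(k, j)%:R * F j.

Lemma Tn_ext (C : comNzRingType) (F G : nat -> C) k :
  (forall j, (j <= k)%N -> F j = G j) -> Tn F k = Tn G k.
Proof. by move=> H; apply: eq_bigr => -[j Hj] _ /=; rewrite H. Qed.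

Lemma Tn_S (C : comNzRingType) (F : nat -> C) k :
  Tn F k.+1 = Tn (fun j => F j.+1) k - Tn F k.
Proof.
rewrite /Tn.
have -> : \sum_(j < k.+2) (-1) ^+ (k.+1 + j) * 'C(k.+1, j)%:R * F j =
  \sum_(j < k.+2) 'C(k.+1, j)%:R * ((-1) ^+ (k.+1 + j) * F j).
  by apply: eq_bigr => j _; ring.
rewrite (@sum_pascal _ k (fun j => (-1) ^+ (k.+1 + j) * F j)) addrC.
congr (_ + _).
  by apply: eq_bigr => j _; rewrite addnS addSn !exprS; ring.
rewrite -sumrN; apply: eq_bigr => j _; rewrite addSn exprS; ring.
Qed.

Lemma Tn_poch (C : comNzRingType) (be : C) n k :
  Tn (fun j => poch (be + j%:R) n) k = (n ^_ k)%:R * poch (be + k%:R) (n - k).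
Proof.
elim: k be => [|k IH] be.
  by rewrite /Tn big_ord1 /= bin0 ffactn0 subn0 expr0 !mul1r.
rewrite Tn_S.
rewrite (@Tn_ext _ _ (fun j => poch ((be + 1) + j%:R) n)); last first.
  by move=> j _; rewrite -natr1; congr poch; ring.
rewrite !IH ffactnSr.
case: (leqP n k) => Hnk.
  have -> : (n - k = 0)%N by apply/eqP; rewrite subn_eq0.
  by rewrite !poch0 muln0 mul0r subrr.
have Hp : (n - k = (n - k.+1).+1)%N by rewrite subnS prednK // subn_gt0.
have HR : ((n - k.+1).+1%:R : C) = n%:R - k%:R by rewrite -Hp natrB // ltnW.
move: (n - k.+1)%N Hp HR => p -> HR.
rewrite pochSr pochSl natrM HR -natr1.
have -> : (be + 1 + k%:R) = be + (k%:R + 1) by ring.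
have -> : (be + k%:R + 1) = be + (k%:R + 1) by ring.
have -> : p%:R = n%:R - k%:R - 1 :> C by rewrite -HR -natr1; ring.
ring.
Qed.

Definition Bf {C : comNzRingType} (n : nat) (y : C) : C := poch (1 - n%:R + y) n.

Lemma Bf_S (C : comNzRingType) n (y : C) : Bf n.+1 y = (y - n%:R) * Bf n y.
Proof.
rewrite /Bf pochSl -natr1.
have -> : 1 - (n%:R + 1) + y + 1 = 1 - n%:R + y by ring.
congr (_ * _); ring.
Qed.

Definition Nrep {C : comNzRingType} (G : C -> C) (d : nat) :=
  exists a : nat -> C, forall y, G y = \sum_(n < d.+1) a n * Bf n y.

Lemma Nrep_ext (C : comNzRingType) (G G' : C -> C) d :
  (forall y, G y = G' y) -> Nrep G d -> Nrep G' d.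
Proof. by move=> E [a Ha]; exists a => y; rewrite -E. Qed.

Lemma Nrep_mulX (C : comNzRingType) (G : C -> C) d s :
  Nrep G d -> Nrep (fun y => G y * (y + s)) d.+1.
Proof.
move=> [a Ha].
exists (fun n => (if n is n'.+1 then a n' else 0) +
                 (if (n < d.+1)%N then (n%:R + s) * a n else 0)) => y.
under eq_bigr => n _ do rewrite mulrDl.
rewrite big_split /= big_ord_recl /= mul0r add0r.
rewrite [X in _ = _ + X]big_ord_recr /= ltnn mul0r addr0.
rewrite Ha big_distrl -big_split /=.
apply: eq_bigr => -[n Hn] _ /=; rewrite Hn /bump /= add1n Bf_S.
ring.
Qed.

Lemma Nrep_poch (C : comNzRingType) (G : C -> C) d s M :
  Nrep G d -> Nrep (fun y => G y * poch (s + y) M) (d + M).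
Proof.
move=> HG; elim: M => [|M IH].
  by rewrite addn0; apply: Nrep_ext; last exact: HG; move=> y /=; rewrite poch0 mulr1.
rewrite addnS.
apply: Nrep_ext; last exact: (@Nrep_mulX _ _ _ (s + M%:R) IH).
move=> y /=.
rewrite pochSr; ring.
Qed.

Lemma Nrep_prod (C : comNzRingType) (I : Type) (s : seq I) (f : I -> C) (m : I -> nat) :
  Nrep (fun y => \prod_(i <- s) poch (f i + y) (m i)) (\sum_(i <- s) m i)%N.
Proof.
elim: s => [|x s IH].
  exists (fun _ => 1) => y; rewrite !big_nil big_ord1 /Bf poch0; ring.
rewrite big_cons addnC.
apply: Nrep_ext; last exact: (@Nrep_poch _ _ _ (f x) (m x) IH).
move=> y /=.
by rewrite big_cons mulrC.
Qed.

Lemma Tn_Z (C : comNzRingType) (c0 : C) (F : nat -> C) k :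
  Tn (fun j => c0 * F j) k = c0 * Tn F k.
Proof. by rewrite /Tn big_distrr; apply: eq_bigr => j _ /=; rewrite mulrCA. Qed.

Lemma Tn_lin (C : comNzRingType) N (a : nat -> C) (F : nat -> nat -> C) k :
  Tn (fun j => \sum_(n < N) a n * F n j) k = \sum_(n < N) a n * Tn (F n) k.
Proof.
rewrite /Tn; under eq_bigr => j _ do rewrite big_distrr.
rewrite exchange_big; apply: eq_bigr => n _; rewrite big_distrr.
by apply: eq_bigr => j _; rewrite /= mulrCA.
Qed.

Lemma T_Bf_nat (C : numFieldType) n k :
  Tn (fun j => Bf n (j%:R : C)) k / (k`!)%:R = (k == n)%:R.
Proof.
have Hk : (k`!)%:R != 0 :> C by rewrite pnatr_eq0 -lt0n fact_gt0.
rewrite /Bf (@Tn_poch _ (1 - n%:R) n k).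
case: (ltngtP k n) => H.
- have Hp : (n - k = (n - k.+1).+1)%N by rewrite subnS prednK // subn_gt0.
  rewrite Hp pochSr.
  have -> : 1 - n%:R + k%:R + (n - k.+1)%:R = 0 :> C.
    rewrite natrB // -natr1; ring.
  by rewrite mulr0 mulr0 mul0r.
- by rewrite ffact_small // mul0r mul0r.
- by rewrite H ffactnn subnn poch0 mulr1 divff // -H.
Qed.

Lemma basisR (C : numFieldType) (b x A : C) M n : (n <= M)%N ->
  \sum_(k < M.+1) poch b k * (Tn (fun j => Bf n (j%:R : C)) k / (k`!)%:R) *
     poch x k * poch A (M - k) = poch b n * poch x n * poch A (M - n).
Proof.
move=> HnM.
under eq_bigr => k _ do rewrite T_Bf_nat.
have Hn : (n < M.+1)%N by [].
rewrite (bigD1 (Ordinal Hn)) //= eqxx mulr1 big1 ?addr0 //.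
move=> k Hk; have -> : (k == n :> nat) = false.
  by apply/negbTE; apply: contra Hk => /eqP E; apply/eqP; apply: val_inj.
by rewrite mulr0 !mul0r.
Qed.

Lemma sum_trunc (C : comNzRingType) M n (F : nat -> C) : (n <= M)%N ->
  (forall k, (n < k)%N -> F k = 0) ->
  \sum_(k < M.+1) F k = \sum_(k < n.+1) F k.
Proof.
move=> HnM HF; rewrite [RHS](big_ord_widen M.+1 F) // big_mkcond /=.
rewrite [RHS]big_mkcond /=; apply: eq_bigr => k _; case: ifP => // /negbT; rewrite -leqNgt => H.
by rewrite HF.
Qed.

Lemma basisL (C : numFieldType) (b c x : C) M n : (n <= M)%N ->
  \sum_(k < M.+1) poch b k * poch (1 - c + b) k *
     (Tn (fun j => Bf n (- b - j%:R)) k / (k`!)%:R) * poch (c - b - M%:R - x) (M - k)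
  = poch b n * poch x n * poch (c - b - M%:R - x) (M - n).
Proof.
move=> HnM.
set A := c - b - M%:R - x.
have E : forall k, (k < M.+1)%N -> poch b k * poch (1 - c + b) k *
     (Tn (fun j => Bf n (- b - j%:R)) k / (k`!)%:R) * poch A (M - k) =
   (-1) ^+ n * poch b n * poch A (M - n) *
     ('C(n, k)%:R * (poch (1 - c + b) k * poch (A + (M - n)%:R) (n - k))).
  move=> k _.
  rewrite (@Tn_ext _ _ (fun j => (-1) ^+ n * poch (b + j%:R) n)); last first.
    move=> j _; rewrite /Bf pochN; congr (_ * poch _ _); ring.
  rewrite Tn_Z Tn_poch.
  case: (leqP k n) => Hkn; last first.
    by rewrite ffact_small // bin_small // !(mulr0n, mul0r, mulr0).
  have Hk : (k`!)%:R != 0 :> C by rewrite pnatr_eq0 -lt0n fact_gt0.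
  rewrite -bin_ffact natrM.
  have Eb : poch b n = poch b k * poch (b + k%:R) (n - k) by rewrite -pochD subnKC.
  have EA : poch A (M - k) = poch A (M - n) * poch (A + (M - n)%:R) (n - k).
    by rewrite -pochD addnBA // subnK // (leq_trans Hkn).
  rewrite Eb EA.
  field.
  done.
rewrite (eq_bigr _ (fun (k : 'I_M.+1) _ => E k (ltn_ord k))) -big_distrr /=.
rewrite (@sum_trunc _ M n (fun k => 'C(n,k)%:R * (poch (1 - c + b) k * poch (A + (M - n)%:R) (n - k)))); last 2 first.
- done.
- by move=> k Hk; rewrite bin_small // !mul0r.
rewrite -vandermonde.
have -> : 1 - c + b + (A + (M - n)%:R) = - x - n%:R + 1.
  by rewrite /A natrB //; ring.
rewrite pochN; have -> : - (- x - n%:R + 1) - n%:R + 1 = x by ring.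
have -> : (-1) ^+ n * poch b n * poch A (M - n) * ((-1) ^+ n * poch x n) =
   ((-1) ^+ n * (-1) ^+ n) * (poch b n * poch x n * poch A (M - n)) by ring.
by rewrite -exprMn mulrNN mulr1 expr1n mul1r.
Qed.

Lemma poch_negk (C : comNzRingType) (k j : nat) :
  poch (- k%:R : C) j = (-1) ^+ j * (k ^_ j)%:R.
Proof.
elim: j => [|j IH]; first by rewrite poch0 ffactn0 expr0 mulr1.
rewrite pochSr IH ffactnSr natrM exprS.
case: (leqP j k) => H.
  rewrite natrB //; ring.
by rewrite ffact_small // !(mulr0n, mul0r, mulr0).
Qed.

Lemma key_D (C : comNzRingType) (u : C) M j :
  poch u M * poch (1 - u) j = poch (1 - u - M%:R) j * poch (u - j%:R) M.
Proof.
rewrite (@pochN _ (1 - u)) (@pochN _ (1 - u - M%:R)).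
have -> : - (1 - u) - j%:R + 1 = u - j%:R by ring.
have -> : - (1 - u - M%:R) - j%:R + 1 = (u - j%:R) + M%:R by ring.
have E : poch (u - j%:R) (j + M) = poch (u - j%:R) j * poch u M.
  by rewrite pochD; congr (_ * poch _ _); ring.
have E2 : poch (u - j%:R) (M + j) = poch (u - j%:R) M * poch (u - j%:R + M%:R) j.
  by rewrite pochD.
have : poch (u - j%:R) j * poch u M = poch (u - j%:R) M * poch (u - j%:R + M%:R) j.
  by rewrite -E -E2 addnC.
move=> H.
rewrite [LHS]mulrCA [X in _ * X]mulrC H; ring.
Qed.

Lemma key_C (C : comNzRingType) (u : C) M j :
  poch u M * poch (u + M%:R) j = poch u j * poch (u + j%:R) M.
Proof. by rewrite -!pochD addnC. Qed.

Lemma Dk_eq (R : realType) (r : nat) (m : 'I_r -> nat) (f : 'I_r -> R[i]) (b : R[i]) k :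
  (k <= msum m)%N ->
  (forall (i : 'I_r) (j : nat), (j <= msum m)%N -> poch (1 - f i + b - (m i)%:R) j != 0) ->
  Dk b f m k = Tn (fun j => \prod_(i < r) poch (f i + (- b - j%:R)) (m i)) k / (k`!)%:R.
Proof.
move=> HkM Hden.
have Hk : (k`!)%:R != 0 :> R[i] by rewrite pnatr_eq0 -lt0n fact_gt0.
rewrite /Dk /hypF /Tn big_distrr mulr_suml; apply: eq_bigr => -[j Hj] _ /=.
have HjM : (j <= msum m)%N by rewrite (leq_trans _ HkM) // -ltnS.
have Hb : \prod_(i < r) poch (1 - f i + b - (m i)%:R) j != 0.
  by rewrite prodf_seq_neq0; apply/allP => i _ /=; exact: Hden.
have Hj' : (j`!)%:R != 0 :> R[i] by rewrite pnatr_eq0 -lt0n fact_gt0.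
have key : pochv (fun i => f i - b) m * \prod_(i < r) poch (1 - f i + b) j =
   \prod_(i < r) poch (1 - f i + b - (m i)%:R) j *
   \prod_(i < r) poch (f i + (- b - j%:R)) (m i).
  rewrite /pochv -!big_split /=; apply: eq_bigr => i _.
  have := @key_D _ (f i - b) (m i) j.
  have -> : 1 - (f i - b) - (m i)%:R = 1 - f i + b - (m i)%:R by ring.
  have -> : 1 - (f i - b) = 1 - f i + b by ring.
  have -> : f i - b - j%:R = f i + (- b - j%:R) by ring.
  done.
set P1 := pochv _ _ in key *; set P2 := \prod_(i < r) poch (1 - f i + b) j in key *.
set P3 := \prod_(i < r) poch (1 - f i + b - (m i)%:R) j in key Hb *.
set P4 := \prod_(i < r) poch (f i + (- b - j%:R)) (m i) in key *.
have -> : P4 = P1 * P2 / P3 by rewrite key; field.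
rewrite poch_negk -bin_ffact natrM exprD.
field.
by rewrite Hj' Hk Hb.
Qed.

Lemma Ck_eq (R : realType) (r : nat) (m : 'I_r -> nat) (f : 'I_r -> R[i]) k :
  (k <= msum m)%N ->
  (forall (i : 'I_r) (j : nat), (j <= msum m)%N -> poch (f i) j != 0) ->
  pochv f m * Ck f m k = Tn (fun j => \prod_(i < r) poch (f i + j%:R) (m i)) k / (k`!)%:R.
Proof.
move=> HkM Hden.
have Hk : (k`!)%:R != 0 :> R[i] by rewrite pnatr_eq0 -lt0n fact_gt0.
rewrite /Ck /hypF /Tn !big_distrr mulr_suml; apply: eq_bigr => -[j Hj] _ /=.
have HjM : (j <= msum m)%N by rewrite (leq_trans _ HkM) // -ltnS.
have Hb : \prod_(i < r) poch (f i) j != 0.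
  by rewrite prodf_seq_neq0; apply/allP => i _ /=; exact: Hden.
have Hj' : (j`!)%:R != 0 :> R[i] by rewrite pnatr_eq0 -lt0n fact_gt0.
have key : pochv f m * \prod_(i < r) poch (f i + (m i)%:R) j =
   \prod_(i < r) poch (f i) j * \prod_(i < r) poch (f i + j%:R) (m i).
  by rewrite /pochv -!big_split /=; apply: eq_bigr => i _; exact: key_C.
set P1 := pochv _ _ in key *; set P2 := \prod_(i < r) poch (f i + (m i)%:R) j in key *.
set P3 := \prod_(i < r) poch (f i) j in key Hb *.
set P4 := \prod_(i < r) poch (f i + j%:R) (m i) in key *.
have -> : P4 = P1 * P2 / P3 by rewrite key; field.
rewrite poch_negk -bin_ffact natrM exprD.
field.
by rewrite Hj' Hk Hb.
Qed.

Lemma sum_swap (C : comNzRingType) M N (a : nat -> C) (X : nat -> C) (T : nat -> nat -> C) :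
  \sum_(k < M) X k * \sum_(n < N) a n * T n k =
  \sum_(n < N) a n * \sum_(k < M) X k * T n k.
Proof.
under eq_bigr => k _ do rewrite big_distrr.
rewrite exchange_big; apply: eq_bigr => n _; rewrite big_distrr.
by apply: eq_bigr => k _ /=; rewrite mulrCA.
Qed.

Theorem lemma2 (R : realType) (r : nat) (m : 'I_r -> nat) (f : 'I_r -> R[i])
  (b c : R[i]) :
  (1 <= r)%N ->
  poch (c - b - (msum m)%:R) (msum m) != 0 ->
  (* standing assumption: all hypergeometric denominators are defined *)
  (forall (i : 'I_r) (j : nat), (j <= msum m)%N ->
     poch (1 - f i + b - (m i)%:R) j != 0 /\ poch (f i) j != 0) ->
  forall x : R[i], Pm b c f m x = pochv f m * Qfun b c f m x.
Proof.
move=> _ _ Hden x.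
rewrite /Pm /Qfun mulrCA; congr (_ * _).
set M := msum m.
set A := c - b - M%:R - x.
have [a Ha] : Nrep (fun y : R[i] => \prod_(i < r) poch (f i + y) (m i)) M :=
  @Nrep_prod _ _ (index_enum 'I_r) f m.
rewrite big_distrr /=.
have -> : \sum_(k < M.+1) poch b k * poch (1 - c + b) k * Dk b f m k * poch A (M - k) =
  \sum_(k < M.+1) (poch b k * poch (1 - c + b) k * poch A (M - k) / (k`!)%:R) *
     \sum_(n < M.+1) a n * Tn (fun j => Bf n (- b - j%:R)) k.
  apply: eq_bigr => -[k Hk] _ /=.
  rewrite Dk_eq //; last by move=> i j Hj; case: (Hden i j Hj).
  rewrite (@Tn_ext _ _ (fun j => \sum_(n < M.+1) a n * Bf n (- b - j%:R))); last first.
    by move=> j _; rewrite Ha.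
  rewrite (@Tn_lin _ M.+1 a (fun n j => Bf n (- b - j%:R))) /=; ring.
have -> : \sum_(k < M.+1) pochv f m * (poch b k * Ck f m k * poch x k * poch A (M - k)) =
  \sum_(k < M.+1) (poch b k * poch x k * poch A (M - k) / (k`!)%:R) *
     \sum_(n < M.+1) a n * Tn (fun j => Bf n (j%:R)) k.
  apply: eq_bigr => -[k Hk] _ /=.
  have -> : pochv f m * (poch b k * Ck f m k * poch x k * poch A (M - k)) =
    (pochv f m * Ck f m k) * (poch b k * poch x k * poch A (M - k)) by ring.
  rewrite Ck_eq //; last by move=> i j Hj; case: (Hden i j Hj).
  rewrite (@Tn_ext _ _ (fun j => \sum_(n < M.+1) a n * Bf n (j%:R : R[i]))); last first.
    by move=> j _; rewrite Ha.
  rewrite (@Tn_lin _ M.+1 a (fun n j => Bf n (j%:R : R[i]))) /=; ring.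
rewrite (@sum_swap _ M.+1 M.+1 a
  (fun k => poch b k * poch (1 - c + b) k * poch A (M - k) / (k`!)%:R)
  (fun n k => Tn (fun j => Bf n (- b - j%:R)) k)).
rewrite (@sum_swap _ M.+1 M.+1 a
  (fun k => poch b k * poch x k * poch A (M - k) / (k`!)%:R)
  (fun n k => Tn (fun j => Bf n (j%:R : R[i])) k)).
apply: eq_bigr => -[n Hn] _ /=; congr (_ * _).
have HnM : (n <= M)%N by [].
transitivity (poch b n * poch x n * poch A (M - n)).
  rewrite -(@basisL _ b c x M n HnM) -/A.
  by apply: eq_bigr => k _ /=; ring.
rewrite -(@basisR _ b x A M n HnM).
by apply: eq_bigr => k _ /=; ring.
Qed.
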